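(* For every positive constant $\varepsilon$, there is a deterministic Congested Clique algorithm which, on an input graph $G$ with arboricity $a\ge 2$, partitions the edge set of $G$ into $O(a^{1+\varepsilon})$ forests, each vertex knowing the label and orientation (towards its parent) of each incident edge, with each vertex having at most one parent in each forest, within $O(1)$ rounds.
   Context: Congested Clique model: there are $n$ processors (vertices) with distinct IDs of $O(\log n)$ bits; computation proceeds in synchronous rounds; in each round every pair of vertices may exchange a message of $O(\log n)$ bits; local computation is free. The input is a graph $G=(V,E')$ on the same vertex set; each vertex initially knows its incident edges in $G$, and $a$ is known to all vertices. The arboricity of a graph is the minimum number of forests whose union covers its edge set. *)

(* Defs.v *)
From mathcomp Require Import all_boot.
Set Implicit Arguments. Unset Strict Implicit. Unset Printing Implicit Defensive.

Definition forest (n : nat) (F : rel 'I_n) : Prop :=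
  ~ exists s : seq 'I_n, [/\ 2 < size s, uniq s & cycle F s].

Definition covered_by_forests (n : nat) (G : rel 'I_n) (k : nat) : Prop :=
  exists F : 'I_k -> rel 'I_n,
    (forall i, symmetric (F i)) /\
    (forall i u v, F i u v -> G u v) /\
    (forall i, forest (F i)) /\
    (forall u v, G u v -> exists i, F i u v).

Definition has_arboricity (n : nat) (G : rel 'I_n) (a : nat) : Prop :=
  covered_by_forests G a /\ (forall k, covered_by_forests G k -> a <= k).

Definition nbr (n : nat) (G : rel 'I_n) (v : 'I_n) : {ffun 'I_n -> bool} :=
  [ffun u => G v u].

(* History of a vertex: for each completed round, the message (a nat) it
   received from each vertex. *)
Definition history (n : nat) := seq {ffun 'I_n -> nat}.

(* A deterministic algorithm for n processors (n and a are known to all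
   vertices, so the algorithm may depend on them).  A vertex's local
   knowledge is its ID v, its incident edges, and everything received so far.
   [send v N h u] = message v sends to u in the next round.
   [output v N h u] = (forest label, "u is my parent") for incident edge {v,u}. *)
Record algorithm (n : nat) := Algorithm {
  send : 'I_n -> {ffun 'I_n -> bool} -> history n -> 'I_n -> nat;
  output : 'I_n -> {ffun 'I_n -> bool} -> history n -> 'I_n -> nat * bool
}.

Fixpoint hist (n : nat) (A : algorithm n) (G : rel 'I_n) (r : nat)
  : 'I_n -> history n :=
  match r with
  | 0 => fun _ => [::]
  | r'.+1 => fun v =>
      rcons (hist A G r' v)
            [ffun u => send A u (nbr G u) (hist A G r' u) v]
  end.

(* Every message sent in the first R rounds has O(log n) bits, namely it is
   a number below (n+1)^c, i.e. at most c*log2(n+1) bits. *)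
Definition bandwidth_ok (n : nat) (A : algorithm n) (G : rel 'I_n)
  (R c : nat) : Prop :=
  forall r, r < R -> forall u v : 'I_n,
    send A u (nbr G u) (hist A G r u) v < (n.+1) ^ c.

Definition out (n : nat) (A : algorithm n) (G : rel 'I_n) (R : nat)
  (v u : 'I_n) : nat * bool :=
  output A v (nbr G v) (hist A G R v) u.

Definition forest_decomposition_ok (n : nat) (A : algorithm n)
  (G : rel 'I_n) (R K : nat) : Prop :=
  let o := out A G R in
  [/\ (forall v u, G v u -> (o v u).1 < K),
      (forall v u, G v u -> (o v u).1 = (o u v).1 /\ (o v u).2 = ~~ (o u v).2),
      (forall v u w, G v u -> G v w -> (o v u).1 = (o v w).1 ->
          (o v u).2 -> (o v w).2 -> u = w)
    & (forall i, forest (fun u v => G u v && ((o u v).1 == i)))].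

(* Main.v *)
Require Import Defs.
From mathcomp Require Import all_boot zify.
Set Implicit Arguments. Unset Strict Implicit. Unset Printing Implicit Defensive.

Definition degS n (E : rel 'I_n) (A : {set 'I_n}) v := #|[set w in A | E v w]|.

Lemma sum_bool_card (T : finType) (A : {set T}) (P : pred T) :
  \sum_(w in A) (P w : nat) = #|[set w in A | P w]|.
Proof.
rewrite -sum1_card big_mkcond [RHS]big_mkcond /=.
apply: eq_bigr => i _; rewrite !inE; by case: (i \in A); case: (P i).
Qed.

Lemma cycle_contra n (F : rel 'I_n) : symmetric F -> irreflexive F -> forest F ->
  forall x s' w, uniq (x :: s') -> path F x s' -> w \in s' -> w != head x s' -> F x w -> False.
Proof.
move=> Fs Fi Ff x s' w Hu Hp Hws Hwy Hxw.
apply: Ff.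
set i := index w s'.
have Hi : i < size s' by rewrite index_mem.
have Hi0 : 0 < i.
  rewrite lt0n; apply/eqP => Hi0; move: Hwy.
  by rewrite -(nth_index x Hws) -/i Hi0 nth0 eqxx.
exists (x :: take i.+1 s'); split.
* rewrite /= size_take; case: ifP => _; [by rewrite !ltnS | rewrite ltnS; exact: leq_ltn_trans Hi0 Hi].
* have -> : x :: take i.+1 s' = take i.+2 (x :: s') by [].
  exact: take_uniq.
* rewrite /= rcons_path take_path //=.
  have -> : last x (take i.+1 s') = w.
    by rewrite -nth_last size_takel //= nth_take // nth_index.
  by rewrite Fs.
Qed.

Lemma forest_leaf_aux n (F : rel 'I_n) : symmetric F -> irreflexive F -> forest F ->
  forall U : {set 'I_n}, forall m x s', #|U| - size (x :: s') <= m ->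
  uniq (x :: s') -> all (mem U) (x :: s') -> path F x s' ->
  exists2 v, v \in U & degS F U v <= 1.
Proof.
move=> Fs Fi Ff U m; elim: m => [|m IH] x s' Hm Hu Ha Hp;
  (case: (leqP (degS F U x) 1) => Hd; first by exists x => //; move: Ha => /= /andP[]);
  (have : 0 < #|[set w in U | F x w] :\ head x s'|;
    first (move: Hd; rewrite /degS (cardsD1 (head x s')) => Hd;
    case: (head x s' \in _) Hd => /=; lia));
  case/card_gt0P => w; rewrite !inE => /andP[Hwy /andP[HwU Hxw]];
  (case Hws: (w \in x :: s'); first (exfalso; move: Hws; rewrite inE; case/orP => [/eqP Hwx|Hws];
      [by move: Hxw; rewrite Hwx Fi | exact: (cycle_contra Fs Fi Ff Hu Hp Hws Hwy Hxw)])).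
- have Hsz : size (w :: x :: s') <= #|U|.
    have Hc : uniq (w :: x :: s') by rewrite cons_uniq Hws Hu.
    rewrite -(card_uniqP Hc).
    apply: subset_leq_card; apply/subsetP => z /=; rewrite inE; case/orP => [/eqP->//|Hz].
    by move/allP: Ha => /(_ z Hz).
  move: Hm Hsz; rewrite /=; lia.
- apply: (IH w (x :: s')).
  * move: Hm; rewrite /=; lia.
  * by rewrite cons_uniq Hws Hu.
  * by apply/andP.
  * by apply/andP; rewrite Fs.
Qed.

Lemma forest_leaf n (F : rel 'I_n) : symmetric F -> irreflexive F -> forest F ->
  forall U : {set 'I_n}, forall x, x \in U -> exists2 v, v \in U & degS F U v <= 1.
Proof.
move=> Fs Fi Ff U x Hx.
apply: (@forest_leaf_aux n F Fs Fi Ff U #|U| x [::]) => //=; first lia.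
by rewrite Hx.
Qed.

Lemma degS_D1 n (F : rel 'I_n) (U : {set 'I_n}) v w : v \in U ->
  degS F U w = F w v + degS F (U :\ v) w.
Proof.
move=> Hv; rewrite /degS (cardsD1 v) !inE Hv /=; congr (_ + _).
by apply: eq_card => z; rewrite !inE andbA.
Qed.

Lemma forest_sum n (F : rel 'I_n) : symmetric F -> irreflexive F -> forest F ->
  forall U : {set 'I_n}, U != set0 -> \sum_(v in U) degS F U v + 2 <= 2 * #|U|.
Proof.
move=> Fs Fi Ff.
suff H : forall m (U : {set 'I_n}), #|U| <= m -> U != set0 ->
  \sum_(v in U) degS F U v + 2 <= 2 * #|U| by move=> U; apply: (H #|U|).
elim=> [|m IH] U Hm HU.
  by move: HU; rewrite -card_gt0; lia.
have [x Hx] : exists x, x \in U by apply/set0Pn.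
have [v Hv Hd] := forest_leaf Fs Fi Ff Hx.
rewrite (big_setD1 v Hv) /= [#|U|](cardsD1 v U) Hv.
have E : \sum_(w in U :\ v) degS F U w =
   \sum_(w in U :\ v) (F w v : nat) + \sum_(w in U :\ v) degS F (U :\ v) w.
  by rewrite -big_split; apply: eq_bigr => w _; apply: degS_D1.
rewrite E sum_bool_card.
have H1 : #|[set w in U :\ v | F w v]| <= degS F U v.
  apply: subset_leq_card; apply/subsetP => w; rewrite !inE Fs.
  by case/andP=> /andP[_ ->] ->.
have H2 : degS F U v = degS F (U :\ v) v by rewrite (degS_D1 F v Hv) Fi.
case: (boolP (U :\ v == set0)) => HU'.
  have H3 : degS F (U :\ v) v = 0.
    by rewrite /degS (eqP HU'); apply/eqP; rewrite cards_eq0; apply/eqP/setP => z; rewrite !inE.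
  rewrite (eqP HU') big_set0 cards0 in H1 *.
  by rewrite H2 H3; move: H1; rewrite H2 H3; lia.
have HU'm : #|U :\ v| <= m by move: Hm; rewrite [#|U|](cardsD1 v U) Hv; lia.
have := IH _ HU'm HU'.
move: H1 Hd; lia.
Qed.

Lemma arb_sum n (G : rel 'I_n) a : irreflexive G -> covered_by_forests G a ->
  forall U : {set 'I_n}, \sum_(v in U) degS G U v + 2 * a * (U != set0) <= 2 * a * #|U|.
Proof.
move=> Gi [F [Fs [FG [Ff Fc]]]] U.
have Fi : forall i, irreflexive (F i).
  by move=> i x; apply/negP => /FG; rewrite Gi.
have H1 : forall v, degS G U v <= \sum_(i < a) degS (F i) U v.
  move=> v; rewrite /degS -sum_bool_card.
  have -> : \sum_(i < a) #|[set w in U | F i v w]| = \sum_(i < a) \sum_(w in U) (F i v w : nat).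
    by apply: eq_bigr => i _; rewrite sum_bool_card.
  rewrite exchange_big /=; apply: leq_sum => w _.
  case Hg: (G v w) => //=.
  have [i Hi] := Fc _ _ Hg.
  by rewrite (bigD1 i) //= Hi.
have H2 : \sum_(v in U) degS G U v <= \sum_(i < a) \sum_(v in U) degS (F i) U v.
  rewrite exchange_big /=; apply: leq_sum => v _; exact: H1.
case: (boolP (U == set0)) => HU.
  by rewrite (eqP HU) big_set0 cards0.
have H3 : \sum_(i < a) \sum_(v in U) degS (F i) U v + 2 * a <= 2 * a * #|U|.
  have : \sum_(i < a) (\sum_(v in U) degS (F i) U v + 2) <= \sum_(i < a) (2 * #|U|).
    by apply: leq_sum => i _; apply: forest_sum.
  rewrite big_split /= sum_nat_const card_ord sum_nat_const card_ord; lia.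
move: H2 H3; rewrite /=; lia.
Qed.

Fixpoint peel2 n t (E : rel 'I_n) (A0 : {set 'I_n}) j : {set 'I_n} :=
  if j is j'.+1 then [set v in peel2 t E A0 j' | t < degS E (peel2 t E A0 j') v] else A0.
Definition peel n t (E : rel 'I_n) j := peel2 t E setT j.

Lemma sum_subset_leq (T : finType) (A B : {set T}) (f : T -> nat) :
  A \subset B -> \sum_(x in A) f x <= \sum_(x in B) f x.
Proof.
move=> H; rewrite [X in _ <= X](big_setID A) /=.
have -> : B :&: A = A by apply/setIidPr.
exact: leq_addr.
Qed.

Lemma peel2_sub n t (E : rel 'I_n) (A0 : {set 'I_n}) j : peel2 t E A0 j.+1 \subset peel2 t E A0 j.
Proof. by apply/subsetP => v; rewrite /= inE => /andP[]. Qed.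

Lemma peel2_mono n t (E : rel 'I_n) (A0 : {set 'I_n}) i j : i <= j -> peel2 t E A0 j \subset peel2 t E A0 i.
Proof.
move=> H; rewrite -(subnK H); elim: (j - i) => [|d IH] //=.
by apply: subset_trans (peel2_sub _ _ _ _) IH.
Qed.

Lemma peel2_add n t (E : rel 'I_n) (A0 : {set 'I_n}) i j :
  peel2 t E A0 (i + j) = peel2 t E (peel2 t E A0 i) j.
Proof. elim: j => [|j IH]; first by rewrite addn0. by rewrite addnS /= IH. Qed.

Lemma peel2_subA0 n t (E : rel 'I_n) (A0 : {set 'I_n}) j : peel2 t E A0 j \subset A0.
Proof. exact: (@peel2_mono n t E A0 0 j). Qed.

Lemma peel2_ext n t (E E' : rel 'I_n) (A0 : {set 'I_n}) :
  (forall x y, x \in A0 -> y \in A0 -> E x y = E' x y) ->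
  forall j, peel2 t E A0 j = peel2 t E' A0 j.
Proof.
move=> H; elim=> [|j IH] //=; rewrite IH.
apply/setP => v; rewrite !inE.
case Hv: (v \in peel2 t E' A0 j) => //=.
congr (_ < _); rewrite /degS; apply: eq_card => w; rewrite !inE.
case Hw: (w \in peel2 t E' A0 j) => //=.
apply: H; by [apply: (subsetP (peel2_subA0 _ _ _ _)) Hv | apply: (subsetP (peel2_subA0 _ _ _ _)) Hw].
Qed.

Lemma count_iota_spec (P : nat -> bool) N : P 0 -> (forall j, P j.+1 -> P j) ->
  forall m, m <= N -> P m = (m <= count P (iota 1 N)).
Proof.
move=> P0 Pa; elim: N => [|N IH] m Hm.
  by move: Hm; rewrite leqn0 => /eqP ->.
rewrite -[N.+1]addn1 iotaD count_cat /= addn0 add1n.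
have Hc : count P (iota 1 N) <= N by rewrite (leq_trans (count_size _ _)) // size_iota.
case: (ltnP m N.+1) => Hm'.
  rewrite IH //; case HP: (P N.+1) => /=; last by rewrite addn0.
  have := IH N (leqnn N); rewrite (Pa _ HP) => /esym H.
  have h1 : m <= count P (iota 1 N) by move: H Hm'; lia.
  have h2 : m <= count P (iota 1 N) + 1 by move: H Hm'; lia.
  by rewrite h1 h2.
have -> : m = N.+1 by apply/eqP; rewrite eqn_leq Hm Hm'.
case HP: (P N.+1) => /=.
  have := IH N (leqnn N); rewrite (Pa _ HP) => /esym H; move: H; lia.
move: Hc; lia.
Qed.

Definition lev n t (E : rel 'I_n) v := count (fun j => v \in peel t E j) (iota 1 n).
Definition key n t (E : rel 'I_n) (v : 'I_n) := lev t E v * n + v.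

Section PeelFacts.
End PeelFacts.

Lemma peel_lev n t (E : rel 'I_n) v m : m <= n -> (v \in peel t E m) = (m <= lev t E v).
Proof.
move=> Hm; apply: (@count_iota_spec (fun j => v \in peel t E j)) => //.
move=> j Hj; apply: (subsetP (peel2_sub _ _ _ _)); exact Hj.
Qed.

Lemma lev_le n t (E : rel 'I_n) v : lev t E v <= n.
Proof. by rewrite /lev (leq_trans (count_size _ _)) // size_iota. Qed.

Lemma peel_low n t a (G : rel 'I_n) : irreflexive G -> covered_by_forests G a -> 0 < a -> 2 * a <= t ->
  forall U : {set 'I_n}, U != set0 -> exists2 v, v \in U & degS G U v <= t.
Proof.
move=> Gi Hc Ha Ht U HU.
have H := arb_sum Gi Hc U; rewrite HU /= muln1 in H.
case: (boolP [exists v in U, degS G U v <= t]); first by case/exists_inP => v Hv Hd; exists v.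
move=> /exists_inPn Hall; exfalso.
  have : \sum_(v in U) t.+1 <= \sum_(v in U) degS G U v.
    by apply: leq_sum => v Hv; have := Hall v Hv; rewrite -ltnNge.
  rewrite sum_nat_const.
  have Hm : 2 * a * #|U| <= #|U| * t by rewrite mulnC leq_mul2l Ht orbT.
  have HU0 : 0 < #|U| by rewrite card_gt0.
  move=> Hs; move: H Hm HU0 Hs; set c := #|U|; set s := (\sum_(v in U) degS G U v); set m := c * t; rewrite mulnS -/m; lia.
Qed.

Lemma peel_shrink n t a (G : rel 'I_n) : irreflexive G -> covered_by_forests G a -> 0 < a -> 2 * a <= t ->
  forall j, peel t G j != set0 -> #|peel t G j.+1| < #|peel t G j|.
Proof.
move=> Gi Hc Ha Ht j Hj.
have [v Hv Hd] := peel_low Gi Hc Ha Ht Hj.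
apply: proper_card; apply/properP; split; first exact: peel2_sub.
by exists v => //; rewrite /peel /= inE -/(peel t G j) Hv /= -leqNgt.
Qed.

Lemma peel_card_le n t a (G : rel 'I_n) : irreflexive G -> covered_by_forests G a -> 0 < a -> 2 * a <= t ->
  forall j, #|peel t G j| <= n - j.
Proof.
move=> Gi Hc Ha Ht; elim=> [|j IH]; first by rewrite subn0 cardsT card_ord.
case: (boolP (peel t G j == set0)) => Hj.
  have : peel t G j.+1 \subset peel t G j by exact: peel2_sub.
  rewrite (eqP Hj) subset0 => /eqP ->; by rewrite cards0.
have := peel_shrink Gi Hc Ha Ht Hj; move: IH; lia.
Qed.

Lemma peel_n_empty n t a (G : rel 'I_n) : irreflexive G -> covered_by_forests G a -> 0 < a -> 2 * a <= t ->
  peel t G n = set0.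
Proof.
move=> Gi Hc Ha Ht; apply/eqP; rewrite -cards_eq0.
by have := peel_card_le Gi Hc Ha Ht n; rewrite subnn leqn0.
Qed.

Lemma peel_step_card n t a (G : rel 'I_n) : irreflexive G -> covered_by_forests G a ->
  forall j, t * #|peel t G j.+1| <= 2 * a * #|peel t G j|.
Proof.
move=> Gi Hc j.
set A := peel t G j; set A' := peel t G j.+1.
have H := arb_sum Gi Hc A.
have H1 : \sum_(v in A') t <= \sum_(v in A') degS G A v.
  apply: leq_sum => v; rewrite /A' /peel /= inE -/(peel t G j) -/A => /andP[_ H2]; exact: ltnW.
have H2 : \sum_(v in A') degS G A v <= \sum_(v in A) degS G A v.
  apply: sum_subset_leq; exact: peel2_sub.
move: H1; rewrite sum_nat_const; move: H H2; lia.
Qed.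

Lemma peel_pow_card n t a (G : rel 'I_n) : irreflexive G -> covered_by_forests G a ->
  forall j, t ^ j * #|peel t G j| <= (2 * a) ^ j * n.
Proof.
move=> Gi Hc; elim=> [|j IH]; first by rewrite !expn0 !mul1n /peel /= cardsT card_ord.
have H := @peel_step_card n t a G Gi Hc j.
rewrite !expnS.
apply: (@leq_trans (t ^ j * (2 * a * #|peel t G j|))).
  by rewrite [t * t ^ j]mulnC -mulnA leq_mul2l H orbT.
by rewrite mulnCA -[X in _ <= X]mulnA leq_mul2l IH orbT.
Qed.

Lemma peel_iff n t (G : rel 'I_n) : peel t G n = set0 ->
  forall v m, (v \in peel t G m) = (m <= lev t G v).
Proof.
move=> He v m.
case: (leqP m n) => Hm; first exact: peel_lev.
have Hl : lev t G v < n.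
  rewrite ltnNge -(peel_lev t G v (leqnn n)) He; by rewrite inE.
have -> : (m <= lev t G v) = false by apply/negbTE; rewrite -ltnNge; lia.
apply/negbTE/negP => H.
have := subsetP (peel2_mono t G setT (ltnW Hm)) _ H.
by rewrite -/(peel t G n) He inE.
Qed.

Lemma key_inj n t (G : rel 'I_n) x y : key t G x = key t G y -> x = y.
Proof.
rewrite /key => H; apply: val_inj => /=.
have := congr1 (fun m => m %% n) H; rewrite /= !modnMDl !modn_small //.
Qed.

Lemma key_lt_lev n t (G : rel 'I_n) x y : key t G x < key t G y -> lev t G x <= lev t G y.
Proof.
rewrite /key => H; rewrite leqNgt; apply/negP => Hl.
have Hy := ltn_ord y.
have : lev t G y * n + y < lev t G x * n.
  apply: (@leq_trans ((lev t G y).+1 * n)); first by rewrite mulSn; move: (ltn_ord y) (ltn_ord x); lia.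
  by rewrite leq_mul2r Hl orbT.
move: H; lia.
Qed.

Lemma lev_lt_key n t (G : rel 'I_n) x y : lev t G x < lev t G y -> key t G x < key t G y.
Proof.
move=> Hl; rewrite /key.
have Hx := ltn_ord x.
apply: (@leq_trans ((lev t G x).+1 * n)); first by rewrite mulSn; move: (ltn_ord y) (ltn_ord x); lia.
apply: (@leq_trans (lev t G y * n)); last exact: leq_addr.
by rewrite leq_mul2r Hl orbT.
Qed.

Definition rank n (E : rel 'I_n) (k : 'I_n -> nat) (x y : 'I_n) :=
  #|[set z | E x z && (k x < k z) && (z < y)]|.

Definition oI n t (G : rel 'I_n) (x y : 'I_n) : nat * bool :=
  if key t G x < key t G y then (rank G (key t G) x y, true)
  else (rank G (key t G) y x, false).

Section Ideal.
Variables (n t : nat) (G : rel 'I_n).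
Hypotheses (Gs : symmetric G) (Gi : irreflexive G) (He : peel t G n = set0).
Local Notation key := (key t G).
Local Notation lev := (lev t G).

Lemma up_in_peel x z : key x < key z -> z \in peel t G (lev x).
Proof. by move=> H; rewrite (peel_iff He); apply: key_lt_lev. Qed.

Lemma up_card x : #|[set z | G x z && (key x < key z)]| <= t.
Proof.
have H1 : x \in peel t G (lev x) by rewrite (peel_iff He).
have H2 : x \notin peel t G (lev x).+1 by rewrite (peel_iff He) ltnn.
move: H2; rewrite /peel /= inE -/(peel t G (lev x)) H1 /= -leqNgt => H2.
apply: leq_trans H2; apply: subset_leq_card; apply/subsetP => z; rewrite !inE.
case/andP => -> Hk; by rewrite up_in_peel.
Qed.

Lemma rank_lt x y : G x y -> key x < key y -> rank G key x y < t.
Proof.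
move=> Gxy Hk; apply: leq_trans (up_card x); apply: proper_card; apply/properP; split.
  by apply/subsetP => z; rewrite !inE => /andP[/andP[-> ->]].
by exists y; rewrite !inE ?Gxy ?Hk /= ?ltnn ?andbF.
Qed.

Lemma rank_mono x y (y' : 'I_n) : G x y -> key x < key y -> y < y' -> rank G key x y < rank G key x y'.
Proof.
move=> Gxy Hk Hyy; apply: proper_card; apply/properP; split.
  apply/subsetP => z; rewrite !inE => /andP[-> Hz] /=; exact: ltn_trans Hz Hyy.
by exists y; rewrite !inE ?Gxy ?Hk ?Hyy /= ?ltnn ?andbF.
Qed.

Lemma rank_inj x y (y' : 'I_n) : G x y -> key x < key y -> G x y' -> key x < key y' ->
  rank G key x y = rank G key x y' -> y = y'.
Proof.
move=> G1 K1 G2 K2 E; case: (ltngtP y y') => H.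
- by have := rank_mono G1 K1 H; rewrite E ltnn.
- by have := rank_mono G2 K2 H; rewrite E ltnn.
- exact: val_inj.
Qed.

Lemma key_neq x y : G x y -> key x != key y.
Proof. by move=> Gxy; apply/eqP => /key_inj E; move: Gxy; rewrite E Gi. Qed.

Lemma oI_sym x y : G x y -> (oI t G x y).1 = (oI t G y x).1 /\ (oI t G x y).2 = ~~ (oI t G y x).2.
Proof.
move=> Gxy; have := key_neq Gxy; rewrite neq_ltn => /orP[H|H].
- have H' : (key y < key x) = false by rewrite ltnNge ltnW.
  by rewrite /oI H H'.
- have H' : (key x < key y) = false by rewrite ltnNge ltnW.
  by rewrite /oI H H'.
Qed.

Lemma oI_lt x y : G x y -> (oI t G x y).1 < t.
Proof.
move=> Gxy; have := key_neq Gxy; rewrite neq_ltn => /orP[H|H].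
- by rewrite /oI H /=; apply: rank_lt.
- have H' : (key x < key y) = false by rewrite ltnNge ltnW.
  by rewrite /oI H' /=; apply: rank_lt => //; rewrite Gs.
Qed.

Lemma oI_par x y w : G x y -> G x w -> (oI t G x y).1 = (oI t G x w).1 ->
  (oI t G x y).2 -> (oI t G x w).2 -> y = w.
Proof.
rewrite /oI => G1 G2; case: ifP => // K1; case: ifP => //= K2 E _ _.
exact: rank_inj E.
Qed.

Lemma oI_forest i : forest (fun u v => G u v && ((oI t G u v).1 == i)).
Proof.
set F := fun u v => _.
have Fs : symmetric F.
  move=> u v; rewrite /F; case Guv: (G u v); rewrite Gs Guv //=.
  by case: (oI_sym Guv) => ->.
case=> s [Hs Hu Hc].
have [x0 Hx0] : exists x, x \in s by case: s Hs {Hu Hc} => [|x s'] //= _; exists x; rewrite inE eqxx.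
case: (@arg_minnP _ x0 (fun x => x \in s) key Hx0) => x Hx Hmin.
have Hr := rot_index Hx.
move: Hc Hu Hs; rewrite -(rot_cycle (index x s)) -(rot_uniq (index x s)) -(size_rot (index x s)) Hr.
set r := drop _ _ ++ take _ _.
have Hmem : {subset x :: r <= s} by move=> w; rewrite -Hr mem_rot.
move: Hmem.
case: r => [|y r] //; case: r => [|z r] // Hmem Hc Hu _.
move: Hc; rewrite /cycle rcons_path => /andP[Hp Fl].
move: Hp => /andP[Fxy _].
set l := last x [:: y, z & r] in Fl.
have Hl : l \in z :: r by rewrite /l /= mem_last.
move: Hu; rewrite cons_uniq => /andP[Hxn]; rewrite cons_uniq => /andP[Hyn _].
have Hly : l != y by apply/eqP => El; move: Hyn; rewrite -El Hl.
have Hlx : l != x by apply/eqP => El; move: Hxn; rewrite -El inE Hl orbT.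
have Hyx : y != x by apply/eqP => El; move: Hxn; rewrite -El inE eqxx.
have Hys : y \in s by apply: Hmem; rewrite !inE eqxx orbT.
have Hls : l \in s by apply: Hmem; rewrite inE in_cons Hl !orbT.
have Ky : key x < key y.
  by rewrite ltn_neqAle Hmin // andbT eq_sym; apply/eqP => /key_inj E; move: Hyx; rewrite E eqxx.
have Kl : key x < key l.
  by rewrite ltn_neqAle Hmin // andbT eq_sym; apply/eqP => /key_inj E; move: Hlx; rewrite E eqxx.
rewrite Fs in Fl.
move: Fxy Fl; rewrite /F => /andP[G1 /eqP E1] /andP[G2 /eqP E2].
have := @oI_par x y l G1 G2; rewrite E1 E2 /oI Ky Kl => /(_ erefl erefl erefl) E.
by move: Hly; rewrite E eqxx.
Qed.

End Ideal.

Definition hdflt n : {ffun 'I_n -> nat} := [ffun=> 0].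
Definition rcv n (h : history n) i (x : 'I_n) : nat := (nth (hdflt n) h i) x.
Definition inP n (h : history n) j (x : 'I_n) : bool := rcv h j x == 1.
Definition levk n k (h : history n) (x : 'I_n) := count (fun j => inP h j x) (iota 1 k).
Definition keyk n k (h : history n) (x : 'I_n) := levk k h x * n + x.
Definition Dh n k (h : history n) (x : 'I_n) := rcv h k.+2 x.
Definition off n k (h : history n) (x : 'I_n) := \sum_(y : 'I_n | y < x) Dh k h y.
Definition owner n k (h : history n) (p : 'I_n) : option 'I_n :=
  [pick x | (off k h x <= p) && (p < off k h x + Dh k h x)].

Definition send_alg n t k (u : 'I_n) (N : {ffun 'I_n -> bool}) (h : history n) (w : 'I_n) : nat :=
  let j := size h in
  if j <= k then
     nat_of_bool (if j is j'.+1 then inP h j' u && (t < #|[set x | inP h j' x && N x]|) else true)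
  else if j == k.+1 then
     (if ~~ inP h k u && N w && (keyk k h u < keyk k h w)
      then #|[set z | N z && (keyk k h u < keyk k h z) && (z < w)]| else 0)
  else if j == k.+2 then
     (if inP h k u then #|[set x | inP h k x && N x]| else 0)
  else if j == k.+3 then
     (if inP h k u && (off k h u <= w) && (w < off k h u + Dh k h u)
      then (nth u (enum [set x | inP h k x && N x]) (w - off k h u)).+1 else 0)
  else if j == k.+4 then
     (if owner k h u is Some x then minn n (rcv h k.+3 x) else 0)
  else 0.

Definition Eh n k (h : history n) (x y : 'I_n) : bool :=
  inP h k x && inP h k y &&
  [exists p : 'I_n, (owner k h p == Some x) && (rcv h k.+4 p == y.+1)].
Definition peelh n t k (h : history n) j : {set 'I_n} :=
  if j <= k then [set x | inP h j x] else peel2 t (Eh k h) [set x | inP h k x] (j - k).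
Definition levh n t k (h : history n) (x : 'I_n) := count (fun j => x \in peelh t k h j) (iota 1 n).
Definition keyh n t k (h : history n) (x : 'I_n) := levh t k h x * n + x.

Definition output_alg n t k (v : 'I_n) (N : {ffun 'I_n -> bool}) (h : history n) (u : 'I_n) : nat * bool :=
  if keyh t k h v < keyh t k h u
  then (#|[set z | N z && (keyh t k h v < keyh t k h z) && (z < u)]|, true)
  else (if inP h k v && inP h k u
        then #|[set z | Eh k h u z && (keyh t k h u < keyh t k h z) && (z < v)]|
        else rcv h k.+1 u, false).

Definition Alg n t k : algorithm n := Algorithm (@send_alg n t k) (@output_alg n t k).

Lemma send_bound n t k (u : 'I_n) N h w : send_alg t k u N h w < n.+1.
Proof.
have Hn : 0 < n by apply: leq_ltn_trans (ltn_ord u).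
rewrite /send_alg; case: ifP => _.
  by case: (size h) => [|j] //=; case: (_ && _).
case: ifP => _.
  by case: ifP => // _; rewrite ltnS (leq_trans (max_card _)) // card_ord.
case: ifP => _.
  by case: ifP => // _; rewrite ltnS (leq_trans (max_card _)) // card_ord.
case: ifP => _.
  by case: ifP => // _; rewrite ltnS.
case: ifP => // _.
by case: (owner k h u) => // x; rewrite ltnS geq_minl.
Qed.

Lemma size_hist n (A : algorithm n) G r v : size (hist A G r v) = r.
Proof. by elim: r v => [|r IH] v //=; rewrite size_rcons IH. Qed.

Lemma rcv_hist n (A : algorithm n) G r v j y : j < r ->
  rcv (hist A G r v) j y = send A y (nbr G y) (hist A G j y) v.
Proof.
elim: r => [|r IH] //= Hj.
rewrite /rcv nth_rcons size_hist.
case: ltnP => H; first by rewrite -IH.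
have -> : j = r by apply/eqP; rewrite eqn_leq H -ltnS Hj.
by rewrite eqxx ffunE.
Qed.

Lemma count_le_iota L m : count (fun j => j <= L) (iota 1 m) = minn L m.
Proof.
elim: m => [|m IH]; first by rewrite minn0.
rewrite -[m.+1]addn1 iotaD count_cat IH /= addn0 add1n.
case: (leqP m.+1 L) => H /=; lia.
Qed.

Lemma lt_key_nat n L1 L2 x z : L1 < L2 -> x < n -> L1 * n + x < L2 * n + z.
Proof.
move=> Hl Hx.
apply: (@leq_trans (L1.+1 * n)); first by rewrite mulSn; lia.
apply: (@leq_trans (L2 * n)); last exact: leq_addr.
by rewrite leq_mul2r Hl orbT.
Qed.

Section Sim.
Variables (n t k : nat) (G : rel 'I_n).
Hypotheses (Gs : symmetric G) (Gi : irreflexive G) (He : peel t G n = set0).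
Local Notation A := (@Alg n t k).
Local Notation H r v := (hist A G r v).
Local Notation S := (peel t G k).
Local Notation key := (key t G).
Local Notation lev := (lev t G).

Lemma rcvA r v j y : j < r -> rcv (H r v) j y = send_alg t k y (nbr G y) (H j y) v.
Proof. exact: rcv_hist. Qed.

Lemma phase_msg j : j <= k -> forall x w, send_alg t k x (nbr G x) (H j x) w = (x \in peel t G j).
Proof.
elim: j => [|j IH] Hj x w; rewrite /send_alg size_hist Hj.
  by rewrite /peel /= inE.
have Hj' : j <= k by apply: ltnW.
have E : forall y, inP (H j.+1 x) j y = (y \in peel t G j).
  by move=> y; rewrite /inP rcvA // IH //; case: (y \in _).
rewrite /peel /= inE -/(peel t G j) E; congr (nat_of_bool (_ && (t < _))).
by rewrite /degS; apply: eq_card => z; rewrite !inE E ffunE.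
Qed.

Lemma inP_H r v j y : j <= k -> j < r -> inP (H r v) j y = (y \in peel t G j).
Proof. by move=> H1 H2; rewrite /inP rcvA // phase_msg //; case: (y \in _). Qed.

Lemma levk_H r v y : k < r -> levk k (H r v) y = minn (lev y) k.
Proof.
move=> Hr; rewrite /levk -count_le_iota; apply: eq_in_count => j.
rewrite mem_iota => /andP[_ Hj]; rewrite add1n ltnS in Hj.
by rewrite inP_H ?(peel_iff He) //; apply: leq_ltn_trans Hr.
Qed.

Lemma keyk_key r v x z : k < r -> lev x < k ->
  (keyk k (H r v) x < keyk k (H r v) z) = (key x < key z).
Proof.
move=> Hr Hx; rewrite /keyk !levk_H // /key.
have -> : minn (lev x) k = lev x by apply/minn_idPl; apply: ltnW.
case: (ltnP (lev z) k) => Hz.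
  by rewrite ?(minn_idPl (ltnW Hz)).
rewrite ?(minn_idPr Hz) !lt_key_nat //; exact: leq_trans Hz.
Qed.

Definition Dg (x : 'I_n) := if x \in S then degS G S x else 0.
Definition offI (x : 'I_n) := \sum_(y : 'I_n | y < x) Dg y.
Definition ownerI (p : 'I_n) : option 'I_n := [pick x | (offI x <= p) && (p < offI x + Dg x)].
Definition Nb (x : 'I_n) := [set y in S | G x y].
Definition rteI (x p : 'I_n) : nat :=
  if (x \in S) && (offI x <= p) && (p < offI x + Dg x)
  then (nth x (enum (Nb x)) (p - offI x)).+1 else 0.
Definition relayI (p : 'I_n) : nat := if ownerI p is Some x then minn n (rteI x p) else 0.

Lemma label_msg x w : send_alg t k x (nbr G x) (H k.+1 x) w =
  if (x \notin S) && G x w && (key x < key w) then rank G key x w else 0.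
Proof.
rewrite /send_alg size_hist ltnn eqxx inP_H //.
case Hx: (x \in S); first by [].
simpl negb; rewrite !andTb.
have Hl : lev x < k by rewrite ltnNge -(peel_iff He) Hx.
rewrite ffunE keyk_key //.
case: (G x w && _) => //; rewrite /rank; apply: eq_card => z; rewrite !inE ffunE keyk_key //.
Qed.

Lemma Nb_eq r v x : k < r -> [set y | inP (H r v) k y && nbr G x y] = Nb x.
Proof. by move=> Hr; apply/setP => y; rewrite !inE inP_H // ffunE. Qed.

Lemma deg_msg x w : send_alg t k x (nbr G x) (H k.+2 x) w = Dg x.
Proof.
rewrite /send_alg size_hist (_ : (k.+2 <= k) = false); last lia.
rewrite (_ : (k.+2 == k.+1) = false); last lia.
by rewrite eqxx inP_H // Nb_eq // /Dg /degS.
Qed.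

Lemma Dh_H r v y : k.+2 < r -> Dh k (H r v) y = Dg y.
Proof. by move=> Hr; rewrite /Dh rcvA // deg_msg. Qed.

Lemma off_H r v y : k.+2 < r -> off k (H r v) y = offI y.
Proof. by move=> Hr; rewrite /off /offI; apply: eq_bigr => z _; rewrite Dh_H. Qed.

Lemma owner_H r v p : k.+2 < r -> owner k (H r v) p = ownerI p.
Proof. by move=> Hr; rewrite /owner /ownerI; apply: eq_pick => x; rewrite off_H // Dh_H. Qed.

Lemma route_msg x p : send_alg t k x (nbr G x) (H k.+3 x) p = rteI x p.
Proof.
rewrite /send_alg size_hist (_ : (k.+3 <= k) = false); last lia.
rewrite (_ : (k.+3 == k.+1) = false); last lia.
rewrite (_ : (k.+3 == k.+2) = false); last lia.
have E1 := @off_H k.+3 x x (leqnn _).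
have E2 := @Dh_H k.+3 x x (leqnn _).
have E3 := @Nb_eq k.+3 x x (ltn_trans (ltnSn k) (ltn_trans (ltnSn _) (ltnSn _))).
rewrite eqxx E1 E2 E3 inP_H //; lia.
Qed.

Lemma relay_msg p w : send_alg t k p (nbr G p) (H k.+4 p) w = relayI p.
Proof.
rewrite /send_alg size_hist (_ : (k.+4 <= k) = false); last lia.
rewrite (_ : (k.+4 == k.+1) = false); last lia.
rewrite (_ : (k.+4 == k.+2) = false); last lia.
rewrite (_ : (k.+4 == k.+3) = false); last lia.
have E1 := @owner_H k.+4 p p (ltnW (leqnn _)).
rewrite eqxx E1 /relayI.
case: (ownerI p) => // x; rewrite rcvA //.
by rewrite route_msg.
Qed.

Lemma Eh_H v x y : Eh k (H k.+4.+1 v) x y =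
  (x \in S) && (y \in S) && [exists p, (ownerI p == Some x) && (relayI p == y.+1)].
Proof.
rewrite /Eh; congr (_ && _).
  by rewrite !inP_H //; lia.
apply: eq_existsb => p.
have E1 := @owner_H k.+4.+1 v p (ltnW (ltnW (leqnn _))).
by rewrite E1 rcvA // relay_msg.
Qed.

Lemma sum_lt_le (f : 'I_n -> nat) (x y : 'I_n) : x < y ->
  \sum_(z : 'I_n | z < x) f z + f x <= \sum_(z : 'I_n | z < y) f z.
Proof.
move=> Hxy; rewrite [X in _ <= X](bigD1 x) //= addnC leq_add2l.
rewrite big_mkcond [X in _ <= X]big_mkcond /=; apply: leq_sum => z _.
case: ifP => // Hz; rewrite (ltn_trans Hz Hxy) /=.
by case: eqP => // E; move: Hz; rewrite E ltnn.
Qed.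

Lemma sum_lt_tot (f : 'I_n -> nat) (x : 'I_n) :
  \sum_(z : 'I_n | z < x) f z + f x <= \sum_(z : 'I_n) f z.
Proof.
rewrite [X in _ <= X](bigD1 x) //= addnC leq_add2l.
rewrite big_mkcond [X in _ <= X]big_mkcond /=; apply: leq_sum => z _.
case: ifP => // Hz; case: eqP => // E; by move: Hz; rewrite E ltnn.
Qed.

Hypothesis Hsum : \sum_(x : 'I_n) Dg x <= n.

Lemma int_disj (x y : 'I_n) (p : nat) : offI x <= p < offI x + Dg x ->
  offI y <= p < offI y + Dg y -> x = y.
Proof.
move=> /andP[H1 H2] /andP[H3 H4].
case: (ltngtP x y) => Hxy; last exact: val_inj.
- have := sum_lt_le Dg Hxy; rewrite -/(offI x) -/(offI y); lia.
- have := sum_lt_le Dg Hxy; rewrite -/(offI x) -/(offI y); lia.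
Qed.

Lemma ownerI_spec (x p : 'I_n) : (ownerI p == Some x) = (offI x <= p < offI x + Dg x).
Proof.
rewrite /ownerI; case: pickP => [x' Hx'|Hn].
  apply/eqP/idP => [[<-] //|Hx]; congr Some; exact: int_disj Hx' Hx.
by rewrite Hn.
Qed.

Lemma Nb_card x : x \in S -> #|Nb x| = Dg x.
Proof. by move=> Hx; rewrite /Dg Hx /degS. Qed.

Lemma Eh_correct v x y : x \in S -> y \in S -> Eh k (H k.+4.+1 v) x y = G x y.
Proof.
move=> Hx Hy; rewrite Eh_H Hx Hy /=.
apply/existsP/idP => [[p /andP[Ho Hr]]|Gxy].
  move: Hr; rewrite /relayI; move: (Ho); rewrite ownerI_spec => Hi.
  rewrite (eqP Ho) /rteI Hx Hi /= minnE.
  set m := nth _ _ _.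
  have Hm : m < n := ltn_ord m.
  rewrite (_ : n - (n - m.+1) = m.+1); last lia.
  move/eqP => [] Em.
  have : m \in enum (Nb x).
    apply: mem_nth; rewrite -cardE Nb_card //; move: Hi; lia.
  by have Emy : m = y := val_inj Em; rewrite Emy mem_enum /Nb inE Hy.
have Hyn : y \in Nb x by rewrite /Nb inE Hy.
set i := index y (enum (Nb x)).
have Hi : i < Dg x by rewrite -Nb_card // cardE index_mem mem_enum.
have Hp : offI x + i < n.
  apply: (leq_trans _ Hsum); apply: (leq_trans _ (sum_lt_tot Dg x)); rewrite -/(offI x); lia.
exists (Ordinal Hp); rewrite ownerI_spec /=.
have Hint : offI x <= offI x + i < offI x + Dg x by lia.
rewrite Hint /relayI.
have -> : ownerI (Ordinal Hp) = Some x by apply/eqP; rewrite ownerI_spec.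
rewrite /rteI Hx Hint /= addKn nth_index ?mem_enum //.
by rewrite (minn_idPr _).
Qed.

Lemma peelh_H v j : peelh t k (H k.+4.+1 v) j = peel t G j.
Proof.
rewrite /peelh; case: ifP => Hj.
  apply/setP => y; rewrite inE inP_H //; lia.
have ES : [set x | inP (H k.+4.+1 v) k x] = S.
  apply/setP => y; rewrite inE inP_H //; lia.
have Hext : forall x y, x \in S -> y \in S -> Eh k (H k.+4.+1 v) x y = G x y.
  by move=> x y Hx Hy; apply: Eh_correct.
rewrite ES (peel2_ext t Hext) /peel -peel2_add subnKC //.
by move: Hj => /negbT; rewrite -ltnNge => /ltnW.
Qed.

Lemma keyh_H v x : keyh t k (H k.+4.+1 v) x = key x.
Proof.
rewrite /keyh /levh /key /lev; congr (_ * _ + _).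
by apply: eq_count => j; rewrite peelh_H.
Qed.

Lemma output_ok v u : G v u -> out A G k.+4.+1 v u = oI t G v u.
Proof.
move=> Gvu; rewrite /out.
change (output_alg t k v (nbr G v) (H k.+4.+1 v) u = oI t G v u).
rewrite /output_alg !keyh_H /oI.
case: ifP => Hk.
  congr (_, _); rewrite /rank; apply: eq_card => z; by rewrite !inE ffunE keyh_H.
have Hk' : key u < key v.
  have := key_neq t Gi Gvu; rewrite neq_ltn Hk /= => //.
congr (_, _).
have E1 : inP (H k.+4.+1 v) k v = (v \in S) by rewrite inP_H //; lia.
have E2 : inP (H k.+4.+1 v) k u = (u \in S) by rewrite inP_H //; lia.
rewrite E1 E2.
case: ifP => Hs.
  rewrite /rank; apply: eq_card => z; rewrite !inE keyh_H.
  case: (ltnP (key u) (key z)) => Hz; last by rewrite !andbF.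
  case/andP: Hs => Hv Hu.
  have Hzs : z \in S.
    rewrite (peel_iff He); apply: leq_trans (key_lt_lev Hz).
    by rewrite -(peel_iff He).
  by rewrite Eh_correct.
have Hu : u \notin S.
  apply/negP => Hu; move: Hs; rewrite Hu andbT => /negbT/negP; apply.
  rewrite (peel_iff He); apply: leq_trans (key_lt_lev Hk').
  by rewrite -(peel_iff He).
have E3 := @rcvA k.+4.+1 v k.+1 u (ltnW (ltnW (ltnW (leqnn _)))).
rewrite E3.
by rewrite label_msg Hu Gs Gvu Hk'.
Qed.

End Sim.

Lemma sum_bound n t a k (G : rel 'I_n) : irreflexive G -> covered_by_forests G a -> 0 < a ->
  (2 * a) ^ k.+1 <= t ^ k -> \sum_(x : 'I_n) Dg t k G x <= n.
Proof.
move=> Gi Hc Ha Ht.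
set S := peel t G k.
have H1 : \sum_(x : 'I_n) Dg t k G x = \sum_(x in S) degS G S x.
  rewrite [RHS]big_mkcond; apply: eq_bigr => x _; by rewrite /Dg.
have H2 : \sum_(x in S) degS G S x <= 2 * a * #|S|.
  have := arb_sum Gi Hc S; lia.
have H3 := @peel_pow_card n t a G Gi Hc k.
rewrite H1.
set sm := \sum_(x in S) _ in H2 *.
have HT : 0 < t ^ k.
  apply: leq_trans Ht; by rewrite expn_gt0 muln_gt0 Ha.
rewrite -(leq_pmul2l HT).
apply: (@leq_trans (t ^ k * (2 * a * #|S|))); first by rewrite leq_mul2l H2 orbT.
rewrite mulnCA.
apply: (@leq_trans (2 * a * ((2 * a) ^ k * n))); first by rewrite leq_mul2l H3 orbT.
by rewrite mulnA -expnS leq_mul2r Ht orbT.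
Qed.

Lemma forest_eq n (F F' : rel 'I_n) : F =2 F' -> forest F' -> forest F.
Proof.
move=> E Hf [s [H1 H2 H3]]; apply: Hf; exists s; split => //.
by move: H3; rewrite /cycle; case: s {H1 H2} => [|x s] //; rewrite (eq_path E).
Qed.

Lemma algo_correct n t a k (G : rel 'I_n) : symmetric G -> irreflexive G ->
  covered_by_forests G a -> 0 < a -> (2 * a) ^ k.+1 <= t ^ k -> 2 * a <= t ->
  bandwidth_ok (@Alg n t k) G k.+4.+1 1 /\ forest_decomposition_ok (@Alg n t k) G k.+4.+1 t.
Proof.
move=> Gs Gi Hc Ha Ht Ht2.
split.
  move=> r Hr u v; rewrite expn1. change (send_alg t k u (nbr G u) (hist (@Alg n t k) G r u) v < n.+1). exact: send_bound.
have He := peel_n_empty Gi Hc Ha Ht2.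
have Hsum := sum_bound Gi Hc Ha Ht.
have Ho : forall v u, G v u -> out (@Alg n t k) G k.+4.+1 v u = oI t G v u.
  by move=> v u Gvu; apply: output_ok.
split.
- by move=> v u Gvu; rewrite Ho //; apply: oI_lt.
- move=> v u Gvu; have Guv' : G u v by rewrite Gs.
  rewrite (Ho v u Gvu) (Ho u v Guv'); exact: oI_sym.
- move=> v u w G1 G2; rewrite !Ho //; exact: oI_par.
- move=> i; apply: (forest_eq (F' := fun u v => G u v && ((oI t G u v).1 == i))).
    by move=> u v; case Guv: (G u v); [rewrite (Ho u v Guv) | by []].
  exact: oI_forest.
Qed.

Definition tP (a k0 : nat) := fun t => ((2 * a) ^ k0.+2 <= t ^ k0.+1)%N.

Lemma tP_ex a k0 : exists t, tP a k0 t.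
Proof.
exists ((2 * a) ^ k0.+2); rewrite /tP.
case: ((2 * a) ^ k0.+2) => [|x] //.
by rewrite expnS leq_pmulr // expn_gt0.
Qed.

Lemma expn_pow m n : expn m n = Nat.pow m n.
Proof. by elim: n => [|n IH] //; rewrite expnS IH. Qed.

Lemma tP_ge a k0 t : 0 < a -> tP a k0 t -> 2 * a <= t.
Proof.
move=> Ha Ht; rewrite leqNgt; apply/negP => Hlt.
have H1 : t ^ k0.+1 <= (2 * a) ^ k0.+1 by rewrite leq_exp2r // ltnW.
have H2 : (2 * a) ^ k0.+1 < (2 * a) ^ k0.+2 by rewrite ltn_exp2l //; lia.
move: Ht; rewrite /tP; lia.
Qed.

From Stdlib Require Import Reals Lra.

Lemma Rpower_pos x y : (0 < Rpower x y)%R.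
Proof. rewrite /Rpower; exact: exp_pos. Qed.

Lemma real_bound a k0 eps t : (2 <= a)%N -> (0 < eps)%R -> (/ eps <= INR k0.+1)%R ->
  tP a k0 t -> (forall m, tP a k0 m -> (t <= m)%N) ->
  (INR t <= 5 * Rpower (INR a) (1 + eps))%R.
Proof.
move=> Ha Heps Hk Ht Hmin.
set k := k0.+1.
have Hk1 : (1 <= INR k)%R by rewrite /k S_INR; have := pos_INR k0; lra.
have Ht1 : (0 < t)%N.
  move: Ht; rewrite /tP; case: t {Hmin} => [|t] //.
  rewrite exp0n // leqn0 expn_eq0 muln_eq0 /=; case: a Ha => //.
have Hmin' : (expn (t.-1) k < expn (2 * a) k.+1)%N.
  rewrite ltnNge; apply/negP => H; have := Hmin _ H; case: t Ht1 {Ht Hmin H} => //= t _.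
  by rewrite ltnn.
set e := (1 + / INR k)%R.
have Ha' : (2 <= INR a)%R by have := le_INR _ _ (leP Ha); rewrite /=; lra.
have H2a : INR (2 * a) = (2 * INR a)%R by rewrite mult_INR.
have Hy : (INR t.-1 <= Rpower (INR (2 * a)) e)%R.
  apply: Rnot_lt_le => Hlt.
  have Hpos := Rpower_pos (INR (2 * a)) e.
  have Hkp : (0 < INR k)%R by lra.
  have := Rlt_Rpower_l _ _ (INR k) Hkp (conj Hpos Hlt).
  rewrite Rpower_mult (_ : (e * INR k)%R = INR k.+1); last first.
    rewrite /e S_INR; field; lra.
  rewrite !Rpower_pow; [|lra|rewrite H2a; lra].
  rewrite -!pow_INR -!expn_pow => /INR_lt /ltP H.
  by have := ltn_trans H Hmin'; rewrite ltnn.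
have He1 : (e <= 2)%R.
  rewrite /e; have : (/ INR k <= 1)%R.
    rewrite -Rinv_1; apply: Rinv_le_contravar; lra.
  lra.
have He2 : (e <= 1 + eps)%R.
  rewrite /e; have : (/ INR k <= eps)%R.
    rewrite -(Rinv_inv eps); apply: Rinv_le_contravar => //.
    by apply: Rinv_0_lt_compat.
  lra.
have HP1 : (1 <= Rpower (INR a) (1 + eps))%R.
  rewrite -{1}(Rpower_O (INR a)); last lra.
  apply: Rle_Rpower; lra.
have HPa : (Rpower (INR a) e <= Rpower (INR a) (1 + eps))%R by apply: Rle_Rpower; lra.
have HP2 : (Rpower 2 e <= 4)%R.
  have -> : 4%R = Rpower 2 (INR 2).
    rewrite Rpower_pow /=; lra.
  apply: Rle_Rpower; rewrite /=; lra.
have Hsplit : Rpower (INR (2 * a)) e = (Rpower 2 e * Rpower (INR a) e)%R.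
  rewrite H2a Rpower_mult_distr //; lra.
have Hprod : (Rpower 2 e * Rpower (INR a) e <= 4 * Rpower (INR a) (1 + eps))%R.
  apply: Rmult_le_compat => //; apply: Rlt_le; exact: Rpower_pos.
have Htt : INR t = (INR t.-1 + 1)%R by case: t Ht1 {Ht Hmin Hmin' Hy} => // t _; rewrite S_INR.
rewrite Htt; lra.
Qed.

Theorem mainTheorem9 :
  forall eps : R, (0 < eps)%R ->
  exists (C : R) (Rounds c : nat),
  forall n a : nat, (2 <= a)%N ->
  exists (A : algorithm n) (K : nat),
    (INR K <= C * Rpower (INR a) (1 + eps))%R /\
    forall G : rel 'I_n, symmetric G -> irreflexive G -> has_arboricity G a ->
      bandwidth_ok A G Rounds c /\ forest_decomposition_ok A G Rounds K.
Proof.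
move=> eps Heps.
have [Hup1 _] := archimed (/ eps).
have Hie : (0 < / eps)%R by apply: Rinv_0_lt_compat.
set z := up (/ eps) in Hup1.
have Hz : (0 <= z)%Z by apply: le_IZR; lra.
set k0 := Z.to_nat z.
have Hk : (/ eps <= INR k0.+1)%R.
  rewrite S_INR /k0 INR_IZR_INZ Znat.Z2Nat.id //; lra.
exists 5%R, k0.+1.+4.+1, 1%N.
move=> n a Ha.
set t := ex_minn (tP_ex a k0).
have [Ht Hmin] : tP a k0 t /\ (forall m, tP a k0 m -> (t <= m)%N).
  by rewrite /t; case: ex_minnP.
exists (@Alg n t k0.+1), t; split.
  exact: (real_bound Ha Heps Hk Ht Hmin).
move=> G Gs Gi [Hc _].
have Ha0 : (0 < a)%N by apply: leq_trans Ha.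
apply: (algo_correct Gs Gi Hc Ha0 Ht).
exact: tP_ge Ha0 Ht.
Qed.
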